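(* Let $\mathcal{C}$ be a contraction indicator of order $n$. Define an assignment $Z$ on $S(n)$ by $$Z(G)=\{v\in V(G): \exists\, H\in S_2(n),\ w\in V(H)\text{ with }\ell(w)\in\mathcal{C},\ G\rightsquigarrow H,\ v\rightsquigarrow w\}.$$ Then $Z$ is a smooth extremal assignment.
   Context: $[n]=\{1,\dots,n\}$. A stable $n$-labeled tree is a finite tree with $n$ leaves labeled bijectively by $[n]$, all internal vertices of degree $\ge 3$; $V(G)$ its internal vertices; $S(n)$ the set of such trees up to label-preserving isomorphism and $S_2(n)$ those with exactly 2 internal vertices. For a vertex $w$, $\ell(w)$ is the set of labels of leaves adjacent to $w$. $G\rightsquigarrow G'$: $G'$ obtained by collapsing connected sets of internal vertices, inducing surjection $\pi:V(G)\to V(G')$; $v\rightsquigarrow w$ means $\pi(v)=w$. An extremal assignment of order $n$: rule $Z(G)\subset V(G)$ for $G\in S(n)$ with (a) $Z(G)\ne V(G)$, (b) if $G\rightsquigarrow G'$ and $\pi^{-1}(v')=\{v_1,\dots,v_k\}$ then $v'\in Z(G')\iff v_1,\dots,v_k\in Z(G)$. $Z$ is smooth if for every $G$ and $v\in Z(G)$ there exist $G'\in S_2(n)$, $v'\in Z(G')$ with $G\rightsquigarrow G'$, $v\rightsquigarrow v'$. A contraction indicator is a collection $\mathcal{C}$ of subsets of $[n]$ with (1) $2\le|B|\le n-2$ for $B\in\mathcal{C}$; (2) $B\in\mathcal{C}$, $B'\subset B$, $|B'|\ge2$ imply $B'\in\mathcal{C}$; (3) $B_1\cup B_2\ne[n]$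 for $B_1,B_2\in\mathcal{C}$. *)

(* Defs.v *)
From HB Require Import structures.
From mathcomp Require Import all_boot.
Set Implicit Arguments. Unset Strict Implicit. Unset Printing Implicit Defensive.

(* A stable n-labeled tree, given concretely: internal vertices 'I_nv,
   adjacency [adj] among internal vertices, and leaf i attached to the
   internal vertex [lf i].  The whole graph (internal vertices + leaves) is
   a tree iff the internal graph is a (nonempty) tree: connected with
   nv - 1 edges (each edge counted twice as an ordered pair). *)
Record stree (n : nat) := STree {
  nv : nat;
  adj : rel 'I_nv;
  lf : 'I_n -> 'I_nv;
  nv_gt0 : 0 < nv;
  adj_sym : symmetric adj;
  adj_irr : irreflexive adj;
  adj_conn : forall x y, connect adj x y;
  adj_card : #|[set p : 'I_nv * 'I_nv | adj p.1 p.2]| = (nv.-1).*2;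
  stable : forall v : 'I_nv,
      3 <= #|[set u | adj v u]| + #|[set i | lf i == v]|
}.
Arguments nv {n} s.
Arguments adj {n} s.
Arguments lf {n} s.

Definition leafset {n} (G : stree n) (w : 'I_(nv G)) : {set 'I_n} :=
  [set i | lf G i == w].
Arguments leafset {n} G w.

(* G ~> H via pi : H is obtained from G by collapsing connected sets of
   internal vertices, pi being the induced surjection. *)
Definition contraction n (G H : stree n) (pi : 'I_(nv G) -> 'I_(nv H)) : Prop :=
  [/\ (forall w, exists v, pi v = w),
      (forall i, lf H i = pi (lf G i)),
      (forall u x y, pi x = u -> pi y = u ->
          connect (fun a b => [&& adj G a b, pi a == u & pi b == u]) x y)
    & (forall u w, adj H u w <->
          (u != w /\ exists x y, [/\ pi x = u, pi y = w & adj G x y]))].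
Arguments contraction {n} G H pi.

Definition assignment n := forall G : stree n, 'I_(nv G) -> Prop.

Definition extremal n (Z : assignment n) : Prop :=
  (forall G : stree n, exists v, ~ Z G v) /\
  (forall (G G' : stree n) (pi : 'I_(nv G) -> 'I_(nv G')),
      contraction G G' pi ->
      forall v', Z G' v' <-> (forall v, pi v = v' -> Z G v)).

Definition smooth n (Z : assignment n) : Prop :=
  forall (G : stree n) v, Z G v ->
    exists (G' : stree n) (pi : 'I_(nv G) -> 'I_(nv G')),
      [/\ nv G' = 2, contraction G G' pi & Z G' (pi v)].

Definition contraction_indicator n (C : {set {set 'I_n}}) : Prop :=
  [/\ (forall B : {set 'I_n}, B \in C -> 2 <= #|B| <= n - 2),
      (forall B B' : {set 'I_n}, B \in C -> B' \subset B -> 2 <= #|B'| -> B' \in C)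
    & (forall B1 B2 : {set 'I_n}, B1 \in C -> B2 \in C -> B1 :|: B2 != setT)].

Definition Z_of n (C : {set {set 'I_n}}) : assignment n :=
  fun G v => exists (H : stree n) (pi : 'I_(nv G) -> 'I_(nv H)),
    [/\ nv H = 2, contraction G H pi & leafset H (pi v) \in C].

(* Main.v *)
Require Import Defs.
From mathcomp Require Import all_boot.
From mathcomp Require Import zify.
From Stdlib Require Import Classical.
Set Implicit Arguments. Unset Strict Implicit. Unset Printing Implicit Defensive.

Definition rsr (T : finType) (e : rel T) (X : {set T}) : rel T :=
  fun a b => [&& e a b, a \in X & b \in X].

Lemma exitP (T : finType) (e : rel T) (X : {set T}) a b :
  connect e a b -> a \in X -> b \notin X ->
  exists p q, [/\ connect (rsr e X) a p, p \in X, e p q & q \notin X].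
Proof.
move/connectP=> [s pth ->]; elim: s a pth => [|c s IH] a /=.
  by move=> _ ->.
move=> /andP[eac pth] aX bX.
case cX: (c \in X).
  have [p [q [H1 H2 H3 H4]]] := IH c pth cX bX.
  exists p, q; split=> //; apply: connect_trans H1.
  by apply: connect1; rewrite /rsr eac aX cX.
by exists a, c; split=> //; rewrite cX.
Qed.

Lemma connect_proj (T T' : finType) (e : rel T) (e' : rel T') (f : T -> T') x y :
  (forall a b, e a b -> connect e' (f a) (f b)) -> connect e x y ->
  connect e' (f x) (f y).
Proof.
move=> H /connectP[s pth ->]; elim: s x pth => [|c s IH] x /=.
  by move=> _; rewrite connect0.
by move/andP=> [exc pth]; apply: connect_trans (H _ _ exc) (IH _ pth).
Qed.

Lemma connect_mono (T : finType) (e : rel T) (X Y : {set T}) x y :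
  X \subset Y -> connect (rsr e X) x y -> connect (rsr e Y) x y.
Proof.
move=> sXY; apply: (connect_proj (f := id)) => a b /and3P[eab aX bX].
by apply: connect1; rewrite /rsr eab (subsetP sXY _ aX) (subsetP sXY _ bX).
Qed.

Lemma conn_restr (T : finType) (e : rel T) (X Y : {set T}) x y :
  connect (rsr e X) x y -> (forall z, connect (rsr e X) x z -> z \in Y) ->
  connect (rsr e Y) x y.
Proof.
move/connectP=> [s pth ->]; elim: s x pth => [|c s IH] x /=.
  by move=> _ _; rewrite connect0.
move=> /andP[exc pth] H.
have xY : x \in Y by apply: H; rewrite connect0.
have cY : c \in Y by apply: H; rewrite connect1.
apply: connect_trans (IH c pth _).
  by apply: connect1; move: exc; rewrite /rsr => /and3P[-> _ _]; rewrite xY cY.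
by move=> z hz; apply: H; apply: connect_trans hz; rewrite connect1.
Qed.

Lemma rsr_sym (T : finType) (e : rel T) (X : {set T}) :
  symmetric e -> symmetric (rsr e X).
Proof. by move=> se a b; rewrite /rsr se andbCA andbA [_ && (a \in X)]andbC -andbA andbCA. Qed.

Lemma card_sumb (T : finType) (P : pred T) : #|[set x | P x]| = \sum_x (P x : nat).
Proof.
rewrite -sum1dep_card big_mkcond /=; apply: eq_bigr => x _; by case: (P x).
Qed.

Lemma sum_splitC (T : finType) (A : {set T}) (F : T -> nat) :
  \sum_i F i = \sum_(i in A) F i + \sum_(i in ~: A) F i.
Proof.
rewrite (bigID (mem A)) /=; congr (_ + _); apply: eq_bigl => i; by rewrite in_setC.
Qed.

Lemma sum_ge1 (T : finType) (P : pred T) (F : T -> nat) i :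
  P i -> F i <= \sum_(k | P k) F k.
Proof. by move=> Pi; rewrite (bigD1 i) //= leq_addr. Qed.

Lemma sum_ge2 (T : finType) (P : pred T) (F : T -> nat) i j :
  i != j -> P i -> P j -> F i + F j <= \sum_(k | P k) F k.
Proof.
move=> ij Pi Pj; rewrite (bigD1 i) //= leq_add2l.
by apply: (sum_ge1 (P := fun k => P k && (k != i))); rewrite Pj eq_sym ij.
Qed.

Section Tree.
Variables (n : nat) (G : stree n).
Notation V := 'I_(nv G).

Definition rs (S : {set V}) := rsr (adj G) S.
Definition conn (S : {set V}) := forall x y, x \in S -> y \in S -> connect (rs S) x y.
Definition ec (S T : {set V}) := \sum_(a in S) \sum_(b in T) (adj G a b : nat).
Definition splitp (A : {set V}) :=
  [/\ exists a, a \in A, exists b, b \notin A, conn A & conn (~: A)].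
Definition LA (A : {set V}) := [set i | lf G i \in A].

Lemma total : \sum_a \sum_b (adj G a b : nat) = (nv G).-1.*2.
Proof.
rewrite pair_big /= -(adj_card G) (@card_sumb _ (fun p : V * V => adj G p.1 p.2)); by [].
Qed.

Lemma total_split (A : {set V}) :
  ec A A + ec A (~: A) + ec (~: A) A + ec (~: A) (~: A) = (nv G).-1.*2.
Proof.
rewrite -total (sum_splitC A (fun a => \sum_b (adj G a b : nat))).
rewrite (eq_bigr (fun a => \sum_(b in A) (adj G a b : nat) + \sum_(b in ~:A) (adj G a b : nat))); last by move=> a _; rewrite (sum_splitC A).
rewrite (eq_bigr (fun a => \sum_(b in A) (adj G a b : nat) + \sum_(b in ~:A) (adj G a b : nat)) (P := fun a => a \in ~:A)); last by move=> a _; rewrite (sum_splitC A).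
by rewrite !big_split /= /ec addnA.
Qed.

Lemma cnt (S : {set V}) : conn S -> forall k, k < #|S| ->
  exists T : {set V}, [/\ T \subset S, #|T| = k.+1 & k.*2 <= ec T T].
Proof.
move=> cS; elim=> [|k IH] hk.
  have: S != set0 by rewrite -card_gt0.
  case/set0Pn=> s0 s0S; exists [set s0].
  split.
  - by rewrite sub1set.
  - by rewrite cards1.
  - by [].
have [T [sTS cT eT]] := IH (ltnW hk).
have : T \proper S by rewrite properEcard sTS cT hk.
case/properP=> _ [b bS bT].
have : T != set0 by rewrite -card_gt0 cT.
case/set0Pn=> a aT.
have [p [q [_ pT rpq qT]]] := exitP (cS a b (subsetP sTS _ aT) bS) aT bT.
move: rpq; rewrite /rs /rsr => /and3P[apq _ qS].
exists (q |: T); split.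
- by rewrite subUset sub1set qS sTS.
- by rewrite cardsU1 qT cT.
rewrite /ec big_setU1 //= big_setU1 //=.
under [X in _ + X]eq_bigr => c _ do rewrite big_setU1 //.
rewrite big_split /=.
have h1 : 0 < \sum_(i in T) (adj G q i : nat) by rewrite (bigD1 p) //= adj_sym apq.
have h2 : 0 < \sum_(i in T) (adj G i q : nat) by rewrite (bigD1 p) //= apq.
move: eT; rewrite /ec. set W := (X in _ + (_ + X)). set Y := (X in _ + X + _). set Z := (X in _ + (X + _)). have eY : Y = \sum_(i in T) (adj G q i : nat) by []. have eZ : Z = \sum_(i in T) (adj G i q : nat) by []. have eW : W = \sum_(a in T) \sum_(b in T) (adj G a b : nat) by []. rewrite eY eZ eW. lia.
Qed.

Lemma cnt_all (S : {set V}) : conn S -> S != set0 -> (#|S|).-1.*2 <= ec S S.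
Proof.
move=> cS; rewrite -card_gt0 => h.
have hh : (#|S|).-1 < #|S| by lia.
have [T [sTS cT eT]] := cnt cS hh.
have -> : S = T by apply/eqP; rewrite eq_sym eqEcard sTS cT; lia.
by rewrite cT.
Qed.


Lemma cross_exists (A : {set V}) : (exists a, a \in A) -> (exists b, b \notin A) ->
  exists p q, [/\ p \in A, q \notin A & adj G p q].
Proof.
move=> [a aA] [b bA].
have [p [q [_ pA apq qA]]] := exitP (adj_conn a b) aA bA.
by exists p, q.
Qed.

Lemma deg_sum (A : {set V}) :
  \sum_(v in A) #|[set u | adj G v u]| = ec A A + ec A (~: A).
Proof.
rewrite /ec -big_split; apply: eq_bigr => v _.
by rewrite (@card_sumb _ (fun u => adj G v u)) (sum_splitC A).
Qed.

Lemma leaf_sum (A : {set V}) :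
  \sum_(v in A) #|[set i | lf G i == v]| = #|LA A|.
Proof.
rewrite /LA (@card_sumb _ (fun i => lf G i \in A)).
rewrite (eq_bigr (fun v => \sum_i ((lf G i == v) : nat))); last first.
  by move=> v _; rewrite (@card_sumb _ (fun i => lf G i == v)).
rewrite exchange_big /=; apply: eq_bigr => i _.
case: (boolP (lf G i \in A)) => h.
  rewrite (bigD1 (lf G i)) //= eqxx big1 //= => v /andP[_ hv].
  by rewrite eq_sym (negbTE hv).
rewrite big1 // => v vA; case: eqP => // e.
by move: vA; rewrite -e (negbTE h).
Qed.

Lemma leaf_main (A : {set V}) : splitp A -> 2 <= #|LA A| /\ ec A (~: A) <= 1.
Proof.
case=> [[a aA] [b bA] cA cC].
have hA := cnt_all cA ltac:(by apply/set0Pn; exists a).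
have hC := cnt_all cC ltac:(by apply/set0Pn; exists b; rewrite in_setC).
have hX : 1 <= ec (~: A) A.
  have [p [q [pA qA apq]]] := cross_exists (A := ~: A)
     ltac:(by exists b; rewrite in_setC) ltac:(by exists a; rewrite in_setC negbK).
  rewrite in_setC negbK in qA.
  apply: leq_trans (sum_ge1 (P := fun v => v \in ~: A) (fun v => \sum_(w in A) (adj G v w : nat)) pA).
  by rewrite /= (bigD1 q) //= apq.
have htot : ec A A + ec A (~: A) + ec (~: A) A + ec (~: A) (~: A) = (nv G).-1.*2 := total_split A.
have hcard := cardsC A; rewrite card_ord in hcard.
have h1 : 0 < #|A| by rewrite card_gt0; apply/set0Pn; exists a.
have h2 : 0 < #|~: A| by rewrite card_gt0; apply/set0Pn; exists b; rewrite in_setC.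
have hst : \sum_(v in A) 3 <= \sum_(v in A) (#|[set u | adj G v u]| + #|[set i | lf G i == v]|).
  by apply: leq_sum => v _; apply: stable.
rewrite big_split /= deg_sum leaf_sum sum_nat_const in hst.
have hst' : #|A| * 3 <= ec A A + ec A (~: A) + #|LA A| := hst.
have hA' : (#|A|).-1.*2 <= ec A A := hA.
have hC' : (#|~: A|).-1.*2 <= ec (~: A) (~: A) := hC.
have hX' : 1 <= ec (~: A) A := hX.
have hcard' : #|A| + #|~: A| = nv G := hcard.
clear hst hA hC hX hcard.
lia.
Qed.

Lemma cross_uniq (A : {set V}) x y x' y' : splitp A ->
  x \in A -> y \notin A -> adj G x y -> x' \in A -> y' \notin A -> adj G x' y' ->
  x = x' /\ y = y'.
Proof.
move=> sp xA yA axy xA' yA' axy'.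
have [_ h] := leaf_main sp.
have hy : 1 <= \sum_(b in ~: A) (adj G x b : nat).
  by rewrite (bigD1 y) ?in_setC //= axy.
have hy' : 1 <= \sum_(b in ~: A) (adj G x' b : nat).
  by rewrite (bigD1 y') ?in_setC //= axy'.
case: (eqVneq x x') => [exx|nxx]; last first.
  have := sum_ge2 (P := fun v => v \in A) (fun v => \sum_(b in ~: A) (adj G v b : nat)) nxx xA xA'.
  move=> /= h2; have : 2 <= ec A (~: A) by apply: leq_trans h2; exact: leq_add hy hy'.
  by move=> h3; move: (leq_trans h3 h).
split=> //; case: (eqVneq y y') => // nyy.
subst x'.
have h2 := sum_ge2 (P := fun v => v \in ~: A) (fun v => (adj G x v : nat)) nyy
   ltac:(by rewrite /= in_setC) ltac:(by rewrite /= in_setC).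
rewrite /= axy axy' in h2.
have h3 := sum_ge1 (P := fun v => v \in A) (fun v => \sum_(b in ~: A) (adj G v b : nat)) xA.
have : 2 <= ec A (~: A) by apply: leq_trans h3; apply: leq_trans h2.
lia.
Qed.

End Tree.

Lemma conn_in (T : finType) (e : rel T) (X : {set T}) f v :
  connect (rsr e X) f v -> f \in X -> v \in X.
Proof.
move/connectP=> [s pth ->]; elim: s f pth => [|c s IH] f //=.
by move=> /andP[/and3P[_ _ cX] pth] _; apply: IH.
Qed.

Section Tree2.
Variables (n : nat) (G : stree n).
Notation V := 'I_(nv G).

Lemma rs_sym (S : {set V}) x y : connect (rs S) x y = connect (rs S) y x.
Proof. by apply: sym_connect_sym; apply: rsr_sym; apply: adj_sym. Qed.

Lemma compat (A A' : {set V}) x y : splitp A -> splitp A' ->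
  x \in A -> y \notin A -> adj G x y -> y \in A' ->
  A \subset A' \/ ~: A \subset A'.
Proof.
move=> sA sA' xA yA axy yA'.
have sA0 := sA; have sA'0 := sA'.
case: sA => [_ _ cA cCA]; case: sA' => [_ _ cA' cCA'].
case xA': (x \in A').
  case: (boolP (~: A \subset A')) => [h|h]; first by right.
  left; move/subsetPn: h => [b bCA bA'].
  apply/subsetP => a aA; apply/negPn/negP => aA'.
  have hc := cCA' a b ltac:(by rewrite in_setC) ltac:(by rewrite in_setC).
  rewrite in_setC in bCA.
  have [p [q [_ pA rpq qA]]] := exitP hc aA bCA.
  move: rpq; rewrite /rs /rsr => /and3P[apq pA' qA'].
  have [exp _] := cross_uniq sA0 xA yA axy pA qA apq.
  by rewrite -exp in_setC xA' in pA'.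
right; apply/subsetP => b bCA; apply/negPn/negP => bA'.
have hc := cCA y b ltac:(by rewrite in_setC) bCA.
have [p [q [_ pA' rpq qA']]] := exitP hc yA' bA'.
move: rpq; rewrite /rs /rsr => /and3P[apq pA qA].
have ayx : adj G y x by rewrite adj_sym.
have [_ eqx] := cross_uniq sA'0 pA' qA' apq yA' (negbT xA') ayx.
by rewrite eqx in_setC xA in qA.
Qed.

Lemma comp_split (X F : {set V}) c :
  F \subset X -> conn F -> (exists f, f \in F) -> c \notin X -> conn (~: X) ->
  let K := [set v | [exists f in F, connect (rs X) f v]] in
  [/\ splitp K, K \subset X & F \subset K].
Proof.
move=> sFX cF [f0 f0F] cX cCX K.
have KX : K \subset X.
  apply/subsetP => v; rewrite inE => /existsP[f /andP[fF hf]].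
  by apply: conn_in hf _; apply: (subsetP sFX).
have FK : F \subset K.
  by apply/subsetP => f fF; rewrite inE; apply/existsP; exists f; rewrite fF connect0.
have cK : conn K.
  move=> x y; rewrite !inE => /existsP[fx /andP[fxF hx]] /existsP[fy /andP[fyF hy]].
  have hxy : connect (rs X) x y.
    apply: connect_trans (_ : connect _ x fx) _; first by rewrite rs_sym.
    apply: connect_trans hy; apply: connect_mono sFX _; exact: cF.
  apply: conn_restr hxy _ => z hz; rewrite inE; apply/existsP; exists fx.
  by rewrite fxF; apply: connect_trans hx hz.
have cCK : forall u, u \in ~: K -> connect (rs (~: K)) u c.
  move=> u; rewrite in_setC => uK.
  have cCK' : ~: X \subset ~: K by rewrite setCS.
  case uX: (u \in X); last first.
    apply: connect_mono cCK' _; apply: cCX; by rewrite in_setC ?uX.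
  have [p [q [hup pX apq qX]]] := exitP (adj_conn u c) uX cX.
  have h1 : connect (rs (~: K)) u p.
    apply: conn_restr hup _ => z hz; rewrite in_setC; apply/negP => zK.
    move: zK; rewrite inE => /existsP[f /andP[fF hf]].
    move: uK; rewrite inE => /existsP; apply; exists f; rewrite fF.
    apply: connect_trans hf _; by rewrite rs_sym.
  apply: connect_trans h1 _.
  have pK : p \in ~: K.
    rewrite in_setC; apply/negP => pK; move: uK; rewrite inE => /existsP; apply.
    move: pK; rewrite inE => /existsP[f /andP[fF hf]]; exists f; rewrite fF.
    apply: connect_trans hf _; by rewrite rs_sym.
  have qK : q \in ~: K by rewrite in_setC; apply: contra qX; apply: (subsetP KX).
  apply: connect_trans (_ : connect _ p q) _.
    by apply: connect1; rewrite /rs /rsr apq pK qK.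
  apply: connect_mono cCK' _; apply: cCX; by rewrite in_setC.
split=> //; split=> //.
- by exists f0; apply: (subsetP FK).
- by exists c; apply: contra cX; apply: (subsetP KX).
- move=> x y xK yK; apply: connect_trans (cCK x xK) _; rewrite rs_sym; exact: cCK.
Qed.

End Tree2.

Lemma I2 (u : 'I_2) : u = ord0 \/ u = ord_max.
Proof. by case: u => [[|[|m]] hm] //; [left|right]; apply: val_inj. Qed.

Definition adj2 : rel 'I_2 := fun a b => a != b.

Lemma adj2_sym : symmetric adj2.
Proof. by move=> a b; rewrite /adj2 eq_sym. Qed.

Lemma adj2_irr : irreflexive adj2.
Proof. by move=> a; rewrite /adj2 eqxx. Qed.

Lemma adj2_conn x y : connect adj2 x y.
Proof.
case: (eqVneq x y) => [->|h]; first by rewrite connect0.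
by apply: connect1.
Qed.

Lemma adj2_card : #|[set p : 'I_2 * 'I_2 | adj2 p.1 p.2]| = ((2 : nat).-1).*2.
Proof.
have -> : [set p : 'I_2 * 'I_2 | adj2 p.1 p.2] = [set (ord0, ord_max); (ord_max, ord0)].
  apply/setP => -[a b]; rewrite !inE /adj2 /=.
  by case: (I2 a) => ->; case: (I2 b) => ->.
by rewrite cards2.
Qed.

Section H2.
Variables (n : nat) (L : {set 'I_n}).
Hypotheses (h1 : 2 <= #|L|) (h2 : 2 <= #|~: L|).

Definition lf2 (i : 'I_n) : 'I_2 := if i \in L then ord0 else ord_max.

Lemma stable2 (v : 'I_2) : 3 <= #|[set u | adj2 v u]| + #|[set i | lf2 i == v]|.
Proof.
have e1 : #|[set u | adj2 v u]| = 1.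
  have -> : [set u | adj2 v u] = [set~ v].
    by apply/setP => u; rewrite !inE /adj2 eq_sym.
  by rewrite cardsC1 card_ord.
rewrite e1; case: (I2 v) => ->.
  have -> : [set i | lf2 i == ord0] = L.
    by apply/setP => i; rewrite inE /lf2; case: (i \in L).
  by [].
have -> : [set i | lf2 i == ord_max] = ~: L.
  by apply/setP => i; rewrite !inE /lf2; case: (i \in L).
by [].
Qed.

Definition mkH2 : stree n :=
  @STree n 2 adj2 lf2 isT adj2_sym adj2_irr adj2_conn adj2_card stable2.

End H2.

Section Contr.
Variables (n : nat) (G G' : stree n) (pi : 'I_(nv G) -> 'I_(nv G')).
Hypothesis cp : contraction G G' pi.

Lemma fib_conn u : conn [set v | pi v == u].
Proof.
case: cp => _ _ hf _ x y; rewrite !inE => /eqP hx /eqP hy.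
rewrite (@eq_connect _ _ (fun a b => [&& adj G a b, pi a == u & pi b == u])).
  exact: hf.
by move=> a b; rewrite /rs /rsr !inE.
Qed.

Lemma lift_conn (S' : {set 'I_(nv G')}) : conn S' -> conn [set x | pi x \in S'].
Proof.
move=> cS x y; rewrite !inE => hx hy.
have sub : forall u, u \in S' -> [set v | pi v == u] \subset [set x | pi x \in S'].
  by move=> u uS; apply/subsetP => v; rewrite !inE => /eqP ->.
move: (cS _ _ hx hy) => /connectP[s pth ey].
elim: s x hx pth ey => [|c s IH] x hx /=.
  move=> _ ey; apply: connect_mono (sub _ hx) _; apply: fib_conn; by rewrite inE ?ey.
move=> /andP[rxc pth] ey.
move: rxc; rewrite /rs /rsr => /and3P[axc _ cS'].
case: cp => _ _ _ hadj.
have [_ [x0 [y0 [ex0 ey0 a0]]]] := (hadj (pi x) c).1 axc.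
apply: connect_trans (_ : connect _ x x0) _.
  apply: connect_mono (sub _ hx) _; apply: fib_conn; by rewrite inE ?ex0.
apply: connect_trans (_ : connect _ x0 y0) _.
  by apply: connect1; rewrite /rs /rsr a0 !inE ex0 ey0 hx cS'.
by apply: IH; rewrite ?ey0.
Qed.

Lemma proj_conn (S : {set 'I_(nv G)}) (S' : {set 'I_(nv G')}) :
  (forall a, a \in S -> pi a \in S') -> conn S ->
  (forall x', x' \in S' -> exists x, x \in S /\ pi x = x') -> conn S'.
Proof.
move=> hSS cS hlift x' y' hx hy.
have [x [xS <-]] := hlift _ hx; have [y [yS <-]] := hlift _ hy.
apply: (connect_proj (f := pi)) (cS _ _ xS yS) => a b.
rewrite /rs /rsr => /and3P[ab aS bS].
case: (eqVneq (pi a) (pi b)) => [->|nab]; first by rewrite connect0.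
apply: connect1; rewrite (hSS _ aS) (hSS _ bS) !andbT.
case: cp => _ _ _ hadj; apply/(hadj _ _).2; split=> //; by exists a, b.
Qed.

End Contr.

Lemma contraction_id n (G : stree n) : contraction G G id.
Proof.
split.
- by move=> w; exists w.
- by [].
- by move=> u x y /= -> ->; rewrite connect0.
- move=> u w; split.
    move=> h; split; last by exists u, w.
    by apply/negP => /eqP e; rewrite e adj_irr in h.
  by move=> [_ [x [y [<- <- h]]]].
Qed.

Lemma splitC n (G : stree n) (A : {set 'I_(nv G)}) : splitp A -> splitp (~: A).
Proof.
case=> [[a aA] [b bA] cA cC]; split.
- by exists b; rewrite in_setC.
- by exists a; rewrite in_setC negbK.
- by [].
- by rewrite setCK.
Qed.

Lemma LAC n (G : stree n) (A : {set 'I_(nv G)}) : LA (~: A) = ~: LA A.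
Proof. by apply/setP => i; rewrite !inE. Qed.

Lemma other2 m (e : m = 2) (u : 'I_m) : exists w, w != u /\ forall a, a != u -> a = w.
Proof.
subst m; case: (I2 u) => ->; [exists ord_max | exists ord0]; split=> // a;
  by case: (I2 a) => ->.
Qed.

Lemma LA_sub n (G : stree n) (A B : {set 'I_(nv G)}) : A \subset B -> LA A \subset LA B.
Proof. by move=> sAB; apply/subsetP => i; rewrite !inE; apply: (subsetP sAB). Qed.

Section Main.
Variables (n : nat) (C : {set {set 'I_n}}).
Hypothesis hC : contraction_indicator C.

Definition Csplit (G : stree n) (A : {set 'I_(nv G)}) := splitp A /\ LA A \in C.

Lemma Zchar (G : stree n) v : @Z_of n C G v <-> exists A, Csplit A /\ v \in A.
Proof.
split.
  move=> [H [pi [e2 cp hL]]].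
  have [w [wv wu]] := other2 e2 (pi v).
  have cp0 := cp; case: cp0 => hs hl _ _.
  exists [set x | pi x == pi v]; split; last by rewrite inE.
  have eC : ~: [set x | pi x == pi v] = [set x | pi x == w].
    apply/setP => x; rewrite !inE; case: (eqVneq (pi x) (pi v)) => [->|h].
      by rewrite eq_sym (negbTE wv).
    by rewrite (wu _ h) eqxx.
  split.
    split.
    - by exists v; rewrite inE.
    - have [x hx] := hs w; exists x; rewrite inE hx; exact: wv.
    - exact: fib_conn.
    - rewrite eC; exact: fib_conn.
  have -> : LA [set x | pi x == pi v] = leafset H (pi v).
    by apply/setP => i; rewrite !inE hl.
  exact: hL.
move=> [A [[sp LC] vA]].
have h1 := (leaf_main sp).1.
have h2 := (leaf_main (splitC sp)).1; rewrite LAC in h2.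
have sp0 := sp; case: sp0 => [[a aA] [b bA] cA cCA].
pose pi := fun x : 'I_(nv G) => if x \in A then (ord0 : 'I_2) else ord_max.
have piA : forall x, (pi x == ord0) = (x \in A).
  by move=> x; rewrite /pi; case: (x \in A).
have piM : forall x, (pi x == ord_max) = (x \in ~: A).
  by move=> x; rewrite /pi in_setC; case: (x \in A).
exists (mkH2 h1 h2), pi; split=> //.
- split.
  + move=> w; case: (I2 w) => ->; [exists a | exists b]; apply/eqP.
      by rewrite piA.
    by rewrite piM in_setC.
  + by move=> i; rewrite /= /lf2 /pi /LA inE.
  + move=> u x y; case: (I2 u) => -> hx hy.
      rewrite (@eq_connect _ _ (rs A)); first by apply: cA; rewrite -piA; apply/eqP.
      by move=> c d; rewrite /rs /rsr !piA.
    rewrite (@eq_connect _ _ (rs (~: A))); first by apply: cCA; rewrite -piM; apply/eqP.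
    by move=> c d; rewrite /rs /rsr !piM.
  + move=> u w; split; last by case.
    move=> h; split=> //.
    have [p [q [pA qA apq]]] := cross_exists (G := G) (A := A)
        ltac:(by exists a) ltac:(by exists b).
    have pp : pi p = ord0 by apply/eqP; rewrite piA.
    have pq : pi q = ord_max by apply/eqP; rewrite piM in_setC.
    move: h; rewrite /= /adj2.
    case: (I2 u) => ->; case: (I2 w) => -> // _.
      by exists p, q.
    by exists q, p; rewrite adj_sym.
- have -> : leafset (mkH2 h1 h2) (pi v) = LA A.
    apply/setP => i; rewrite /leafset [in LHS]inE /= /lf2 /pi vA.
    by case: (i \in LA A).
  exact: LC.
Qed.


Lemma union_false (G : stree n) (A A' : {set 'I_(nv G)}) :
  Csplit A -> Csplit A' -> ~: A \subset A' -> False.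
Proof.
move=> [_ h] [_ h'] sub; case: hC => _ _ h3.
have := h3 _ _ h h'.
rewrite (_ : LA A :|: LA A' = setT) ?eqxx //.
apply/setP => i; rewrite !inE.
case: (boolP (lf G i \in A)) => //= hi.
by apply: (subsetP sub); rewrite in_setC.
Qed.

Lemma grow_step (G : stree n) (F A : {set 'I_(nv G)}) : conn F ->
  (forall v, v \in F -> exists A', Csplit A' /\ v \in A') -> Csplit A ->
  (exists f, f \in F /\ f \in A) -> ~~ (F \subset A) ->
  exists A' : {set 'I_(nv G)}, [/\ Csplit A', (exists f, f \in F /\ f \in A') & #|~: A'| < #|~: A|].
Proof.
move=> cF hF CA [f [fF fA]] /subsetPn [g gF gA].
have [p [q [_ pA rpq qA]]] := exitP (cF f g fF gF) fA gA.
move: rpq; rewrite /rs /rsr => /and3P[apq pF qF].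
have [A' [CA' qA']] := hF q qF.
case: (compat CA.1 CA'.1 pA qA apq qA') => [sub|sub]; last by case: (union_false CA CA' sub).
exists A'; split => //; first by exists q.
apply: proper_card; apply/properP; split; first by rewrite setCS.
by exists q; rewrite in_setC ?qA ?qA'.
Qed.

Lemma grow (G : stree n) (F : {set 'I_(nv G)}) : conn F ->
  (forall v, v \in F -> exists A', Csplit A' /\ v \in A') ->
  forall m (A : {set 'I_(nv G)}), #|~: A| <= m -> Csplit A -> (exists f, f \in F /\ f \in A) ->
  exists A0 : {set 'I_(nv G)}, Csplit A0 /\ F \subset A0.
Proof.
move=> cF hF; elim=> [|m IH] A hm CA mF; case: (boolP (F \subset A)) => hFA; try by exists A.
  have [A' [_ _ hc]] := grow_step cF hF CA mF hFA; lia.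
have [A' [CA' mF' hc]] := grow_step cF hF CA mF hFA.
by apply: (IH A') => //; lia.
Qed.

Section Shrink.
Variables (G G' : stree n) (pi : 'I_(nv G) -> 'I_(nv G')) (v' : 'I_(nv G')).
Hypothesis cp : contraction G G' pi.
Notation F := [set v | pi v == v'].

Lemma shrink_step (A : {set 'I_(nv G)}) a c : Csplit A -> F \subset A ->
  pi a = pi c -> a \in A -> c \notin A ->
  exists K : {set 'I_(nv G)}, [/\ Csplit K, F \subset K & #|K| < #|A|].
Proof.
move=> CA FA eac aA cA.
have CA0 := CA; case: CA0 => [[_ _ cAA cCA] LAC0].
case: (cp) => hs _ _ _.
pose F2 := [set v | pi v == pi a].
pose X := A :\: F2.
have sFX : F \subset X.
  apply/subsetP => f fF; rewrite in_setD (subsetP FA _ fF) andbT inE.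
  apply/negP => /eqP efa; move: fF; rewrite inE => /eqP efv.
  have : c \in F by rewrite inE -eac -efa efv.
  by move/(subsetP FA); rewrite (negbTE cA).
have cF : conn F := fib_conn cp (u := v').
have exF : exists f, f \in F by have [f hf] := hs v'; exists f; rewrite inE hf.
have cX : c \notin X by rewrite in_setD negb_and cA orbT.
have cF2 : c \in F2 by rewrite inE eac.
have hcc : forall u, u \in ~: X -> connect (rs (~: X)) u c.
  move=> u; rewrite in_setC in_setD negb_and negbK => /orP[uF2|uA].
    apply: connect_mono (fib_conn cp (u := pi a) uF2 cF2).
    by apply/subsetP => z zF; rewrite in_setC in_setD zF.
  apply: connect_mono (cCA u c ltac:(by rewrite in_setC) ltac:(by rewrite in_setC)).
  by apply/subsetP => z; rewrite !in_setC in_setD negb_and => ->; rewrite orbT.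
have cCX : conn (~: X).
  move=> x y xX yX; apply: connect_trans (hcc x xX) _; rewrite rs_sym; exact: hcc.
have [spK KX FK] := comp_split sFX cF exF cX cCX.
set K := [set v | [exists f in F, connect (rs X) f v]] in spK KX FK.
have KA : K \subset A by apply: subset_trans KX _; apply: subsetDl.
exists K; split=> //.
  split=> //; case: hC => _ h2 _.
  apply: (h2 (LA A)) => //; last exact: (leaf_main spK).1.
  exact: LA_sub.
apply: proper_card; apply/properP; split=> //; exists a => //.
apply/negP => /(subsetP KX); by rewrite in_setD inE eqxx.
Qed.

Lemma shrink : forall m (A : {set 'I_(nv G)}), #|A| <= m -> Csplit A -> F \subset A ->
  exists A0 : {set 'I_(nv G)}, [/\ Csplit A0, F \subset A0 &
     forall a b, pi a = pi b -> a \in A0 -> b \in A0].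
Proof.
elim=> [|m IH] A hm CA FA;
  (case: (classic (forall a b, pi a = pi b -> a \in A -> b \in A)) => sat; first by exists A);
  (have [a [c [eac [aA cA]]]] : exists a c, pi a = pi c /\ a \in A /\ c \notin A by
    apply: NNPP => hn; apply: sat => a b eab aA; apply/negPn/negP => bA; apply: hn;
    exists a, b);
  have [K [CK FK hK]] := shrink_step CA FA eac aA cA.
  lia.
by apply: (IH K) => //; lia.
Qed.

End Shrink.

End Main.


Unset Implicit Arguments.
Theorem proposition7p7 (n : nat) (C : {set {set 'I_n}}) :
  contraction_indicator C -> extremal (Z_of C) /\ smooth (Z_of C).
Proof.
move=> hC; split; [split|].
- move=> G; apply: NNPP => hno.
  have hall : forall v : 'I_(nv G), @Z_of n C G v by move=> v; apply: NNPP => hv; apply: hno; exists v.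
  have cT : conn [set: 'I_(nv G)].
    move=> x y _ _; rewrite (@eq_connect _ _ (adj G)); first exact: adj_conn.
    by move=> a b; rewrite /rs /rsr !inE !andbT.
  pose v0 : 'I_(nv G) := Ordinal (nv_gt0 G).
  have [A [CA vA]] := (Zchar C v0).1 (hall v0).
  have hF : forall v, v \in [set: 'I_(nv G)] -> exists A', Csplit C A' /\ v \in A'.
    by move=> v _; apply: (Zchar C v).1.
  have [A0 [[[_ [b bA] _ _] _] sub]] :=
    grow hC cT hF (leqnn _) CA ltac:(by exists v0; rewrite in_setT).
  by move: bA; rewrite (subsetP sub b (in_setT b)).
- move=> G G' pi cp v'; have cp0 := cp; case: cp0 => hs hl _ _; split.
    move/(Zchar C) => [A' [[[_ [b' bA'] cA' cCA'] LC] vA']] v ev.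
    apply/(Zchar C); exists [set x | pi x \in A']; split; last by rewrite inE ev.
    split.
      split.
      + by exists v; rewrite inE ev.
      + by have [x hx] := hs b'; exists x; rewrite inE hx.
      + exact: lift_conn.
      + have -> : ~: [set x | pi x \in A'] = [set x | pi x \in ~: A'].
          by apply/setP => x; rewrite !inE.
        exact: lift_conn.
    have -> : LA [set x | pi x \in A'] = LA A' by apply/setP => i; rewrite !inE hl.
    exact: LC.
  move=> hall.
  pose F := [set v | pi v == v'].
  have cF : conn F := fib_conn cp (u := v').
  have [v0 ev0] := hs v'.
  have [A [CA vA]] := (Zchar C v0).1 (hall v0 ev0).
  have hF : forall v, v \in F -> exists A', Csplit C A' /\ v \in A'.
    by move=> v; rewrite inE => /eqP ev; apply: (Zchar C v).1; apply: hall.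
  have [A1 [CA1 FA1]] := grow hC cF hF (leqnn _) CA ltac:(by exists v0; rewrite inE ev0).
  have [A2 [CA2 FA2 sat]] := shrink hC cp (leqnn _) CA1 FA1.
  have v0A2 : v0 \in A2 by apply: (subsetP FA2); rewrite inE ev0.
  case: (CA2) => [[_ [b bA] cA cCA] LC].
  pose A' := [set y | [exists x in A2, pi x == y]].
  have memA' : forall x, (pi x \in A') = (x \in A2).
    move=> x; rewrite inE; apply/existsP/idP => [[z /andP[zA /eqP ez]]|xA].
      exact: sat ez zA.
    by exists x; rewrite xA eqxx.
  apply/(Zchar C); exists A'; split; last by rewrite -ev0 memA'.
  split.
    split.
    + by exists v'; rewrite -ev0 memA'.
    + by exists (pi b); rewrite memA'.
    + apply: (proj_conn cp _ cA) => [x xA|x']; first by rewrite memA'.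
      rewrite inE => /existsP[x /andP[xA /eqP <-]]; by exists x.
    + apply: (proj_conn cp _ cCA) => [x|x']; first by rewrite !in_setC memA'.
      move=> hx; have [x ex] := hs x'; exists x; split=> //.
      by rewrite in_setC -memA' ex -in_setC.
  have -> : LA A' = LA A2 by apply/setP => i; rewrite /LA [in LHS]inE [in RHS]inE hl; exact: memA'.
  exact: LC.
- move=> G v [H [pi [e2 cp hL]]]; exists H, pi; split=> //.
  exists H, id; split=> //; exact: contraction_id.
Qed.
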